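(* Let $R$ be a commutative Bezout domain and let $\Phi=\mathrm{diag}(\varphi_1,\dots,\varphi_t,0,\dots,0)$ be an $n\times n$ $d$-matrix with $\varphi_t\neq0$. Then $\mathbf G_\Phi$ consists exactly of the invertible $n\times n$ matrices $H=(h_{ij})$ such that $h_{ij}=0$ for all $i>t$, $j\le t$, and $\frac{\varphi_i}{\varphi_j}\mid h_{ij}$ for all $1\le j<i\le t$; i.e. $H=\begin{pmatrix}H_1&*\\0&H_2\end{pmatrix}$ with $H_2\in GL_{n-t}(R)$ and $H_1$ a $t\times t$ matrix whose entry in position $(i,j)$, $i>j$, has the form $\frac{\varphi_i}{\varphi_j}h'_{ij}$.
   Context: A commutative Bezout domain is a commutative integral domain with $1\ne0$ in which every finitely generated ideal is principal. A $d$-matrix is a diagonal matrix $\mathrm{diag}(\varphi_1,\dots)$ with $\varphi_i\mid\varphi_{i+1}$. For an $n\times n$ $d$-matrix $\Phi$, the Zelisko group is $\mathbf G_\Phi=\{H\in GL_n(R):\ \exists K\in GL_n(R),\ H\Phi=\Phi K\}$. *)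

(* Defs.v *)
From HB Require Import structures.
From mathcomp Require Import all_boot all_order all_algebra.
Set Implicit Arguments. Unset Strict Implicit. Unset Printing Implicit Defensive.
Import GRing.Theory.
Local Open Scope ring_scope.

Definition dvdR (R : comRingType) (a b : R) : Prop := exists c : R, b = c * a.

Definition in_fg_ideal (R : comRingType) (s : seq R) (x : R) : Prop :=
  exists c : 'I_(size s) -> R, x = \sum_(i < size s) c i * s`_i.

Definition bezout_domain (R : idomainType) : Prop :=
  forall s : seq R, exists d : R,
    forall x : R, in_fg_ideal s x <-> exists r : R, x = r * d.

(* d-matrix diag(phi_0,...,phi_{t-1},0,...,0) of size n (0-based indices) *)
Definition dmx (R : idomainType) (n t : nat) (phi : nat -> R) : 'M[R]_n :=
  diag_mx (\row_(i < n) (if (i < t)%N then phi i else 0)).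

Definition zelisko (R : idomainType) (n : nat) (Phi : 'M[R]_n) (H : 'M[R]_n) : Prop :=
  H \in unitmx /\ exists K : 'M[R]_n, K \in unitmx /\ H *m Phi = Phi *m K.

(* Main.v *)
Require Import Defs.
From mathcomp Require Import all_boot all_order all_algebra.
Import GRing.Theory.
Local Open Scope ring_scope.

Lemma chain_dvd (R : idomainType) (t : nat) (phi : nat -> R)
  (phi_div : forall i : nat, (i.+1 < t)%N -> dvdR (phi i) (phi i.+1)) :
  forall i j, (j <= i)%N -> (i < t)%N -> dvdR (phi j) (phi i).
Proof.
elim=> [|i IH] j.
  by rewrite leqn0 => /eqP -> _; exists 1; rewrite mul1r.
rewrite leq_eqVlt => /orP [/eqP -> _|]; first by exists 1; rewrite mul1r.
rewrite ltnS => ji it.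
have [c Hc] := IH j ji (ltnW it).
have [d Hd] := phi_div i it.
by exists (d * c); rewrite Hd Hc mulrA.
Qed.

Lemma phi_nz (R : idomainType) (t : nat) (phi : nat -> R)
  (phi_div : forall i : nat, (i.+1 < t)%N -> dvdR (phi i) (phi i.+1))
  (phi_t : phi t.-1 != 0) j : (j < t)%N -> phi j != 0.
Proof.
move=> jt; have t0 : (0 < t)%N by apply: leq_ltn_trans jt.
have h1 : (j <= t.-1)%N by rewrite -ltnS prednK.
have h2 : (t.-1 < t)%N by rewrite prednK.
have [c Hc] := @chain_dvd _ _ _ phi_div t.-1 j h1 h2.
by apply: contraNneq phi_t => e; rewrite Hc e mulr0.
Qed.

Lemma dmx_entryL (R : idomainType) n t phi (A : 'M[R]_n) i j :
  (A *m dmx n t phi) i j = A i j * (if (j < t)%N then phi j else 0).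
Proof. by rewrite /dmx mul_mx_diag !mxE. Qed.

Lemma dmx_entryR (R : idomainType) n t phi (A : 'M[R]_n) i j :
  (dmx n t phi *m A) i j = (if (i < t)%N then phi i else 0) * A i j.
Proof. by rewrite /dmx mul_diag_mx !mxE. Qed.

Theorem theorem2p7 (R : idomainType) (HB : bezout_domain R) (n t : nat)
  (phi : nat -> R) (t_pos : (0 < t)%N) (t_le : (t <= n)%N)
  (phi_div : forall i : nat, (i.+1 < t)%N -> dvdR (phi i) (phi i.+1))
  (phi_t : phi t.-1 != 0) (H : 'M[R]_n) :
  zelisko (dmx n t phi) H <->
  [/\ H \in unitmx,
      (forall i j : 'I_n, (t <= i)%N -> (j < t)%N -> H i j = 0) &
      (forall i j : 'I_n, (j < i)%N -> (i < t)%N ->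
         exists q h' : R, phi i = q * phi j /\ H i j = q * h')].
Proof.
have nz := phi_nz _ _ _ phi_div phi_t.
split.
  case=> Hu [K [Ku HK]]; split => // i j.
    move=> ti jt; have := congr1 (fun M : 'M_n => M i j) HK => /=.
    rewrite dmx_entryL dmx_entryR jt ltnNge ti /= mul0r => /eqP.
    by rewrite mulf_eq0 (negbTE (nz _ jt)) orbF => /eqP.
  move=> ji it; have jt := ltn_trans ji it.
  have [q Hq] := chain_dvd _ _ _ phi_div _ _ (ltnW ji) it.
  exists q, (K i j); split => //.
  have := congr1 (fun M : 'M_n => M i j) HK => /=.
  rewrite dmx_entryL dmx_entryR jt it Hq -mulrA [phi j * _]mulrC mulrA => /eqP.
  by rewrite (inj_eq (mulIf (nz _ jt))) => /eqP.
move: H; rewrite -(subnKC t_le); move: (n - t)%N => m H [Hu Hlow Hdiv].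
have spec : forall p : 'I_(t+m) * 'I_(t+m), exists k : R,
  H p.1 p.2 * (if (p.2 < t)%N then phi p.2 else 0) = (if (p.1 < t)%N then phi p.1 else 0) * k /\
  ((t <= p.1)%N -> k = (p.1 == p.2)%:R) /\ ((p.1 < t)%N -> (t <= p.2)%N -> k = 0).
  case=> i j /=; case: (ltnP i t) => it.
    have nti : (t <= i)%N = false by rewrite leqNgt it.
    case: (ltnP j t) => jt.
      case: (ltnP j i) => ji.
        have [q [h' [Hq Hh]]] := Hdiv i j ji it.
        exists h'; rewrite Hh Hq; split; first by rewrite mulrAC.
        by [].

      have [r Hr] := chain_dvd _ _ _ phi_div _ _ ji jt.
      exists (H i j * r); rewrite Hr; split; first by rewrite [LHS]mulrA [LHS]mulrC.
      by [].
    exists 0; split; first by rewrite !mulr0.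
    by [].
  have nit : (i < t)%N = false by rewrite ltnNge it.
  exists (i == j)%:R; case: (ltnP j t) => jt.
    by rewrite Hlow // mul0r mul0r.
  by rewrite mulr0 mul0r.
have [f Hf] := fin_all_exists spec.
pose K : 'M[R]_(t+m) := \matrix_(i, j) f (i, j).
split => //; exists K; split; last first.
  apply/matrixP => i j; rewrite dmx_entryL dmx_entryR mxE; exact: (Hf (i, j)).1.
have Kur : ursubmx K = 0.
  apply/matrixP => i j; rewrite !mxE; apply: (Hf _).2.2 => /=; first exact: ltn_ord.
  exact: leq_addr.
have Kdr : drsubmx K = 1%:M.
  apply/matrixP => i j; rewrite !mxE; rewrite (Hf _).2.1 /=; last exact: leq_addr.
  by rewrite eq_rshift.
have Hdl : dlsubmx H = 0.
  apply/matrixP => i j; rewrite !mxE; apply: Hlow => /=; first exact: leq_addr.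
  exact: ltn_ord.
move: Hu; rewrite !unitmxE -(submxK H) -(submxK K) Hdl Kur Kdr det_ublock det_lblock det1 mulr1.
rewrite unitrM => /andP [H1u _].
pose D1 : 'M[R]_t := diag_mx (\row_(i < t) phi i).
have E : ulsubmx H *m D1 = D1 *m ulsubmx K.
  apply/matrixP => i j; rewrite mul_mx_diag mul_diag_mx !mxE.
  have := (Hf (lshift m i, lshift m j)).1; rewrite /= !ltn_ord; exact.
have D1nz : \det D1 != 0.
  rewrite det_diag; apply/prodf_neq0 => i _; rewrite mxE; exact: nz.
have := congr1 determinant E; rewrite !det_mulmx mulrC => /(mulfI D1nz) <-.
by [].
Qed.
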